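(* The space $(\mathbb{Q}_Q(\mathbb{R}^n),\mathcal{G})$ is positively curved in the sense of Alexandrov: for all $A,B,C\in\mathbb{Q}_Q(\mathbb{R}^n)$, every geodesic $\gamma$ from $A$ to $B$ and every $t\in[0,1]$, $$\mathcal{G}^2(\gamma(t),C)\ge (1-t)\mathcal{G}^2(A,C)+t\,\mathcal{G}^2(B,C)-t(1-t)\mathcal{G}^2(A,B).$$
   Context: $\mathbb{Q}_Q(\mathbb{R}^n)$ denotes the set of unordered $Q$-tuples of points of $\mathbb{R}^n$, written $\sum_{i=1}^Q[[a_i]]$; two such sums are equal iff the tuples agree up to a permutation. The metric is $\mathcal{G}\big(\sum_i[[a_i]],\sum_i[[b_i]]\big)=\min_{\sigma}\big(\sum_{i=1}^Q|a_i-b_{\sigma(i)}|^2\big)^{1/2}$ over permutations $\sigma$ of $\{1,\dots,Q\}$. A geodesic from $A$ to $B$ is a curve $\gamma:[0,1]\to\mathbb{Q}_Q(\mathbb{R}^n)$ with $\gamma(0)=A$, $\gamma(1)=B$ and $\mathcal{G}(\gamma(s),\gamma(t))=|t-s|\,\mathcal{G}(A,B)$ for all $s,t\in[0,1]$. *)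

(* Defs.v *)
From HB Require Import structures.
From mathcomp Require Import all_boot all_order all_algebra all_fingroup.
From mathcomp Require Import reals.
Set Implicit Arguments. Unset Strict Implicit. Unset Printing Implicit Defensive.
Import Order.TTheory GRing.Theory Num.Theory.
Local Open Scope ring_scope.

(* A Q-point is represented by an ordered Q-tuple of points of R^n;
   the unordered Q-point sum_i [[a_i]] is its class modulo permutations. *)
Definition Qpt (R : realType) (Q n : nat) := 'I_Q -> 'rV[R]_n.

Definition sqdist (R : realType) (n : nat) (a b : 'rV[R]_n) : R :=
  \sum_(j < n) (a ord0 j - b ord0 j) ^+ 2.

Definition match_cost (R : realType) (Q n : nat) (A B : Qpt R Q n) (s : 'S_Q) : R :=
  \sum_(i < Q) sqdist (A i) (B (s i)).

Definition Gsq (R : realType) (Q n : nat) (A B : Qpt R Q n) : R :=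
  \big[Num.min/match_cost A B 1%g]_(s : 'S_Q) match_cost A B s.

Definition G (R : realType) (Q n : nat) (A B : Qpt R Q n) : R := Num.sqrt (Gsq A B).

Definition Qeq (R : realType) (Q n : nat) (A B : Qpt R Q n) : Prop :=
  exists s : 'S_Q, forall i, B (s i) = A i.

(* geodesic from A to B, a curve gamma : [0,1] -> Q_Q(R^n)
   (only its values on [0,1] matter) *)
Definition geodesic (R : realType) (Q n : nat) (A B : Qpt R Q n)
    (gamma : R -> Qpt R Q n) : Prop :=
  Qeq (gamma 0) A /\ Qeq (gamma 1) B /\
  forall s t : R, 0 <= s <= 1 -> 0 <= t <= 1 ->
    G (gamma s) (gamma t) = `|t - s| * G A B.

(* Main.v *)
Require Import Defs.
From HB Require Import structures.
From mathcomp Require Import all_boot all_order all_algebra all_fingroup.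
From mathcomp Require Import reals.
From mathcomp Require Import ring lra.
Import Order.TTheory GRing.Theory Num.Theory.
Local Open Scope ring_scope.

Section Aux.
Variable R : realType.
Variables Q n : nat.

Lemma bigmin_le (T : eqType) (r : seq T) (F : T -> R) x0 s :
  s \in r -> \big[Num.min/x0]_(i <- r) F i <= F s.
Proof.
elim: r => [//|a r IH]; rewrite inE big_cons => /orP [/eqP->|Hs].
  by rewrite ge_min lexx.
by rewrite ge_min IH // orbT.
Qed.

Lemma bigmin_ex (T : eqType) (r : seq T) (F : T -> R) s0 :
  exists s, \big[Num.min/F s0]_(i <- r) F i = F s.
Proof.
elim: r => [|a r [s IH]]; first by exists s0; rewrite big_nil.
rewrite big_cons IH; case: (leP (F a) (F s)) => H.
  by exists a.
by exists s.
Qed.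

Lemma Gsq_le (A B : Qpt R Q n) s : Gsq A B <= match_cost A B s.
Proof. by apply: bigmin_le; rewrite mem_index_enum. Qed.

Lemma Gsq_ex (A B : Qpt R Q n) : exists s, Gsq A B = match_cost A B s.
Proof. exact: bigmin_ex. Qed.

Lemma sqdist_ge0 (a b : 'rV[R]_n) : 0 <= sqdist a b.
Proof. by apply: sumr_ge0 => j _; apply: sqr_ge0. Qed.

Lemma Gsq_ge0 (A B : Qpt R Q n) : 0 <= Gsq A B.
Proof.
have [s ->] := Gsq_ex A B.
by apply: sumr_ge0 => i _; apply: sqdist_ge0.
Qed.

Lemma G2 (A B : Qpt R Q n) : G A B ^+ 2 = Gsq A B.
Proof. by rewrite /G sqr_sqrtr // Gsq_ge0. Qed.

Lemma key (A B : Qpt R Q n) (p q : 'S_Q) :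
  Gsq A B <= \sum_k sqdist (A (p k)) (B (q k)).
Proof.
rewrite (reindex_inj (@perm_inj _ (p^-1)%g)) /=.
apply: le_trans (Gsq_le A B (p^-1 * q)%g) _.
rewrite /match_cost le_eqVlt; apply/orP; left; apply/eqP.
by apply: eq_bigr => i _; rewrite permKV permM.
Qed.

Lemma Gsq_le_perm (A B A' B' : Qpt R Q n) (p q : 'S_Q) :
  (forall k, A' k = A (p k)) -> (forall k, B' k = B (q k)) ->
  Gsq A B <= Gsq A' B'.
Proof.
move=> HA HB; have [s ->] := Gsq_ex A' B'.
apply: le_trans (key A B p (s * q)%g) _.
rewrite /match_cost le_eqVlt; apply/orP; left; apply/eqP.
by apply: eq_bigr => i _; rewrite HA HB permM.
Qed.

Lemma Gsq_perm (A B A' B' : Qpt R Q n) (p q : 'S_Q) :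
  (forall k, A' k = A (p k)) -> (forall k, B' k = B (q k)) ->
  Gsq A' B' = Gsq A B.
Proof.
move=> HA HB; apply/eqP; rewrite eq_le; apply/andP; split; last first.
  exact: Gsq_le_perm HA HB.
apply: (Gsq_le_perm _ _ _ _ (p^-1)%g (q^-1)%g) => k.
  by rewrite HA permKV.
by rewrite HB permKV.
Qed.

Definition SS (f : 'I_Q -> 'I_n -> R) := \sum_(k < Q) \sum_(j < n) f k j.

Lemma lin3 (F f g h : 'I_Q -> 'I_n -> R) al be ga :
  (forall k j, F k j = al * f k j + be * g k j + ga * h k j) ->
  SS F = al * SS f + be * SS g + ga * SS h.
Proof.
move=> H; rewrite /SS !mulr_sumr -!big_split; apply: eq_bigr => k _ /=.
rewrite !mulr_sumr -!big_split; apply: eq_bigr => j _ /=; exact: H.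
Qed.

Lemma lin4 (F f g h l : 'I_Q -> 'I_n -> R) al be ga de :
  (forall k j, F k j = al * f k j + be * g k j + ga * h k j + de * l k j) ->
  SS F = al * SS f + be * SS g + ga * SS h + de * SS l.
Proof.
move=> H; rewrite /SS !mulr_sumr -!big_split; apply: eq_bigr => k _ /=.
rewrite !mulr_sumr -!big_split; apply: eq_bigr => j _ /=; exact: H.
Qed.

Lemma pure (a b c x : 'I_Q -> 'rV[R]_n) t D :
  0 <= t <= 1 ->
  \sum_k sqdist (a k) (x k) = t ^+ 2 * D ->
  \sum_k sqdist (x k) (b k) = (1 - t) ^+ 2 * D ->
  D <= \sum_k sqdist (a k) (b k) ->
  \sum_k sqdist (x k) (c k) =
    (1 - t) * \sum_k sqdist (a k) (c k) + t * \sum_k sqdist (b k) (c k)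
    - t * (1 - t) * D.
Proof.
move=> /andP [t0 t1]; rewrite /sqdist.
set A := fun k j => a k ord0 j; set B := fun k j => b k ord0 j.
set C := fun k j => c k ord0 j; set X := fun k j => x k ord0 j.
rewrite -/(SS (fun k j => (A k j - X k j) ^+ 2)).
rewrite -/(SS (fun k j => (X k j - B k j) ^+ 2)).
rewrite -/(SS (fun k j => (A k j - B k j) ^+ 2)).
rewrite -/(SS (fun k j => (X k j - C k j) ^+ 2)).
rewrite -/(SS (fun k j => (A k j - C k j) ^+ 2)).
rewrite -/(SS (fun k j => (B k j - C k j) ^+ 2)).
set e := fun k j => t * (B k j - X k j) - (1 - t) * (X k j - A k j).
move=> hax hxb hab.
have E : SS (fun k j => e k j ^+ 2) =
   (1 - t) * SS (fun k j => (A k j - X k j) ^+ 2)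
   + t * SS (fun k j => (X k j - B k j) ^+ 2)
   + (- (t * (1 - t))) * SS (fun k j => (A k j - B k j) ^+ 2).
  by apply: lin3 => k j; rewrite /e; ring.
have E0 : SS (fun k j => e k j ^+ 2) = 0.
  apply/eqP; rewrite eq_le; apply/andP; split.
    rewrite E hax hxb.
    have : 0 <= t * (1 - t) by apply: mulr_ge0; lra.
    nra.
  by apply: sumr_ge0 => k _; apply: sumr_ge0 => j _; apply: sqr_ge0.
have e0 : forall k j, e k j = 0.
  move=> k j.
  have P1 : forall i : 'I_Q, predT i -> 0 <= \sum_(j < n) e i j ^+ 2.
    by move=> i _; apply: sumr_ge0 => j' _; apply: sqr_ge0.
  have H1 := psumr_eq0P P1 E0.
  have P2 : forall j' : 'I_n, predT j' -> 0 <= e k j' ^+ 2.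
    by move=> j' _; apply: sqr_ge0.
  have H2' := psumr_eq0P P2 (H1 k isT).
  have H2 := H2' j isT.
  by move/eqP: H2; rewrite sqrf_eq0 => /eqP.
have E2 : SS (fun k j => (X k j - C k j) ^+ 2) =
   (1 - t) * SS (fun k j => (A k j - C k j) ^+ 2)
   + t * SS (fun k j => (B k j - C k j) ^+ 2)
   + (- (1 - t)) * SS (fun k j => (A k j - X k j) ^+ 2)
   + (- t) * SS (fun k j => (X k j - B k j) ^+ 2).
  apply: lin4 => k j; have := e0 k j; rewrite /e => h.
  have -> : (X k j - C k j) ^+ 2 = (1 - t) * (A k j - C k j) ^+ 2
   + t * (B k j - C k j) ^+ 2 + - (1 - t) * (A k j - X k j) ^+ 2
   + - t * (X k j - B k j) ^+ 2
   - 2 * (X k j - C k j) * (t * (B k j - X k j) - (1 - t) * (X k j - A k j))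
   by ring.
  by rewrite h mulr0 subr0.
rewrite E2 hax hxb; ring.
Qed.

End Aux.
Arguments Gsq_ex {R Q n}.
Arguments key {R Q n}.

Theorem theorem3p2 (R : realType) (Q n : nat) (A B C : Qpt R Q n)
    (gamma : R -> Qpt R Q n) (t : R) :
  geodesic A B gamma -> 0 <= t <= 1 ->
  G (gamma t) C ^+ 2 >=
    (1 - t) * G A C ^+ 2 + t * G B C ^+ 2 - t * (1 - t) * G A B ^+ 2.
Proof.
move=> [[s0 H0] [[s1 H1] Hg]] ht.
have /andP [t0 t1] := ht.
set X := gamma t.
rewrite !G2.
have h01 : 0 <= (0:R) <= 1 by rewrite lexx ler01.
have h11 : 0 <= (1:R) <= 1 by rewrite lexx ler01.
have g0 := Hg 0 t h01 ht; have g1 := Hg t 1 ht h11.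
have hAX : Gsq A X = t ^+ 2 * Gsq A B.
  rewrite -(@Gsq_perm _ _ _ A X (gamma 0) X s0 1%g) => [|k|k]; last by rewrite perm1.
    by rewrite -G2 g0 subr0 exprMn G2 ger0_norm.
  by rewrite H0.
have hXB : Gsq X B = (1 - t) ^+ 2 * Gsq A B.
  rewrite -(@Gsq_perm _ _ _ X B X (gamma 1) 1%g s1) => [|k|k]; last by rewrite H1.
    by rewrite -G2 g1 exprMn G2 ger0_norm // subr_ge0.
  by rewrite perm1.
have [pa Ea] := Gsq_ex A X.
have [pb Eb] := Gsq_ex X B.
have [pc Ec] := Gsq_ex X C.
have Sax : \sum_k sqdist (A ((pa^-1)%g k)) (X k) = t ^+ 2 * Gsq A B.
  rewrite -hAX Ea /match_cost (reindex_inj (@perm_inj _ pa)) /=.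
  by apply: eq_bigr => i _; rewrite permK.
have := @pure R Q n (fun k => A ((pa^-1)%g k)) (fun k => B (pb k))
  (fun k => C (pc k)) X t (Gsq A B) ht Sax.
rewrite -hXB Eb => /(_ erefl (key A B _ _)) /= Hp.
rewrite Ec /match_cost Hp.
have k1 := key A C (pa^-1)%g pc.
have k2 := key B C pb pc.
have : 0 <= (1 - t) * (\sum_k sqdist (A ((pa^-1)%g k)) (C (pc k)) - Gsq A C).
  by apply: mulr_ge0; lra.
have : 0 <= t * (\sum_k sqdist (B (pb k)) (C (pc k)) - Gsq B C).
  by apply: mulr_ge0; lra.
lra.
Qed.
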